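(* Let $\sigma(x)=1/(1+e^{-x})$, let $N,d\in\mathbb{N}$ with $N>2$, and let $f_{mult}$ and $c_{56}$ be as in the context. Let $0<A\le1$ and assume $c_{56}\cdot4^{dN}\cdot A^{N-1}\le1$. Then there exists a feedforward neural network $f_{mult,d}:\mathbb{R}^d\to\mathbb{R}$ with activation function $\sigma$, with at most $\lceil\log_2 d\rceil$ hidden layers and at most $2Nd$ neurons in each layer, all of whose weights are bounded in absolute value by a constant not depending on $A$, such that for all $x_1,\dots,x_d\in[-A,A]$ $$\Big|f_{mult,d}(x_1,\dots,x_d)-\prod_{j=1}^dx_j\Big|\le c_{57}A^N,$$ where $c_{57}\ge0$ is a constant not depending on $A$.
   Context: Fix $t_\sigma\in\mathbb{R}$ with $\sigma''(t_\sigma)\ne0$, and $\alpha_j,\beta_j$ ($j=0,\dots,N-1$), $c_{54}\ge0$ such that $f_{net,x^2}(x)=\frac{2}{\sigma''(t_\sigma)}\sum_{j=0}^{N-1}\alpha_j\sigma(\beta_jx+t_\sigma)$ satisfies $|f_{net,x^2}(x)-x^2|\le c_{54}A^N$ for all $A>0$, $x\in[-A,A]$. Let $f_{mult}(x,y)=\frac14(f_{net,x^2}(x+y)-f_{net,x^2}(x-y))$ and let $c_{56}>0$ be a constant (depending only on $c_{54},N$) such that $|f_{mult}(x,y)-xy|\le c_{56}A^N$ for all $A>0$, $x,y\in[-A,A]$. A feedforward network with $\sigma$ activation: each hidden neuron computes $\sigma$ of an affine combination of the outputs of the previous layer (or of the inputs), and the output is an affine combination of the last hidden layer (or of the inputs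 if there are no hidden layers). *)

(* Defs.v *)
From Stdlib Require Import Reals Lra Lia List.
From Coquelicot Require Import Coquelicot.
Import ListNotations.
Open Scope R_scope.

Definition logistic (x : R) : R := 1 / (1 + exp (- x)).

Definition lsum (n : nat) (f : nat -> R) : R := fold_right Rplus 0 (map f (seq 0 n)).
Definition lprod (n : nat) (f : nat -> R) : R := fold_right Rmult 1 (map f (seq 0 n)).

Definition f_net_sq (N : nat) (t : R) (alpha beta : nat -> R) (x : R) : R :=
  2 / Derive_n logistic 2 t * lsum N (fun j => alpha j * logistic (beta j * x + t)).

Definition f_mult (N : nat) (t : R) (alpha beta : nat -> R) (x y : R) : R :=
  / 4 * (f_net_sq N t alpha beta (x + y) - f_net_sq N t alpha beta (x - y)).

(** Vectors of width m are functions nat -> R, only the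
    entries 0..m-1 being relevant. *)
Record layer := { lw : nat; lW : nat -> nat -> R; lb : nat -> R }.

Record net := { n_in : nat; n_hidden : list layer; n_out_w : nat -> R; n_out_b : R }.

Fixpoint eval_hidden (act : R -> R) (m : nat) (ls : list layer) (x : nat -> R)
  : nat * (nat -> R) :=
  match ls with
  | [] => (m, x)
  | l :: ls' =>
      eval_hidden act (lw l) ls' (fun i => act (lsum m (fun j => lW l i j * x j) + lb l i))
  end.

Definition net_eval (act : R -> R) (f : net) (x : nat -> R) : R :=
  let '(m, y) := eval_hidden act (n_in f) (n_hidden f) x in
  lsum m (fun j => n_out_w f j * y j) + n_out_b f.

Definition last_width (m : nat) (ls : list layer) : nat :=
  fold_left (fun _ l => lw l) ls m.

Fixpoint hidden_wbound (B : R) (m : nat) (ls : list layer) : Prop :=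
  match ls with
  | [] => True
  | l :: ls' =>
      (forall i j, (i < lw l)%nat -> (j < m)%nat -> Rabs (lW l i j) <= B) /\
      (forall i, (i < lw l)%nat -> Rabs (lb l i) <= B) /\
      hidden_wbound B (lw l) ls'
  end.

Definition net_wbound (B : R) (f : net) : Prop :=
  hidden_wbound B (n_in f) (n_hidden f) /\
  (forall j, (j < last_width (n_in f) (n_hidden f))%nat -> Rabs (n_out_w f j) <= B) /\
  Rabs (n_out_b f) <= B.

Definition num_hidden (f : net) : nat := length (n_hidden f).
Definition widths_le (k : nat) (f : net) : Prop := List.Forall (fun l => (lw l <= k)%nat) (n_hidden f).

(* Main.v *)
Require Import Defs.
From Stdlib Require Import Reals List.
From Coquelicot Require Import Coquelicot.
From Stdlib Require Import Lra Lia.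
Import ListNotations.
Open Scope R_scope.

Lemma lsum_0 f : lsum 0 f = 0.
Proof. reflexivity. Qed.

Lemma lsum_shift n f : lsum (S n) f = f 0%nat + lsum n (fun i => f (S i)).
Proof.
  unfold lsum. simpl. f_equal. rewrite <- seq_shift, map_map. reflexivity.
Qed.

Lemma lsum_S n f : lsum (S n) f = lsum n f + f n.
Proof.
  revert f; induction n; intros f.
  - unfold lsum; simpl; lra.
  - rewrite lsum_shift, IHn, (lsum_shift n). lra.
Qed.

Lemma lsum_ext n f g : (forall i, (i < n)%nat -> f i = g i) -> lsum n f = lsum n g.
Proof.
  induction n; intros H; [reflexivity|].
  rewrite !lsum_S, IHn by (intros; apply H; lia). rewrite H by lia. reflexivity.
Qed.

Lemma lsum_plus n f g : lsum n (fun i => f i + g i) = lsum n f + lsum n g.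
Proof. induction n; [unfold lsum; simpl; lra|]. rewrite !lsum_S, IHn. lra. Qed.

Lemma lsum_scal n c f : lsum n (fun i => c * f i) = c * lsum n f.
Proof. induction n; [unfold lsum; simpl; lra|]. rewrite !lsum_S, IHn. lra. Qed.

Lemma lsum_zero n f : (forall i, (i < n)%nat -> f i = 0) -> lsum n f = 0.
Proof. intros H; rewrite (lsum_ext n f (fun _ => 0 * 0)) by (intros; rewrite H; lra || auto).
  rewrite lsum_scal. lra. Qed.

Lemma lsum_add a b f : lsum (a + b) f = lsum a f + lsum b (fun i => f (a + i)%nat).
Proof.
  induction b.
  - rewrite Nat.add_0_r, lsum_0. lra.
  - rewrite Nat.add_succ_r, !lsum_S, IHb. lra.
Qed.

Lemma lsum_mul a b f : lsum (a * b) f = lsum b (fun q => lsum a (fun r => f (a * q + r)%nat)).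
Proof.
  induction b.
  - rewrite Nat.mul_0_r. reflexivity.
  - rewrite Nat.mul_succ_r, lsum_add, lsum_S, IHb. reflexivity.
Qed.

Lemma lsum_swap a b (F : nat -> nat -> R) :
  lsum a (fun k => lsum b (fun m => F k m)) = lsum b (fun m => lsum a (fun k => F k m)).
Proof.
  induction a.
  - rewrite lsum_0. symmetry. apply lsum_zero. intros; reflexivity.
  - rewrite lsum_S, IHa, <- lsum_plus. apply lsum_ext. intros; rewrite lsum_S; reflexivity.
Qed.

Lemma lsum_single n k f : (k < n)%nat -> (forall i, (i < n)%nat -> i <> k -> f i = 0) -> lsum n f = f k.
Proof.
  induction n; intros Hk H; [lia|].
  rewrite lsum_S. destruct (Nat.eq_dec k n).
  - subst. rewrite lsum_zero; [lra|]. intros; apply H; lia.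
  - rewrite IHn by (auto; lia). rewrite (H n) by lia. lra.
Qed.

Lemma lsum_abs n f : Rabs (lsum n f) <= lsum n (fun i => Rabs (f i)).
Proof.
  induction n; [unfold lsum; simpl; rewrite Rabs_R0; lra|].
  rewrite !lsum_S. eapply Rle_trans; [apply Rabs_triang|]. lra.
Qed.

Lemma lsum_le n f g : (forall i, (i < n)%nat -> f i <= g i) -> lsum n f <= lsum n g.
Proof.
  induction n; intros H; [unfold lsum; simpl; lra|].
  rewrite !lsum_S. assert (f n <= g n) by (apply H; lia).
  assert (lsum n f <= lsum n g) by (apply IHn; intros; apply H; lia). lra.
Qed.

Lemma sum_f_R0_lsum f n : sum_f_R0 f n = lsum (S n) f.
Proof. induction n; [unfold lsum; simpl; lra|]. rewrite lsum_S. simpl. rewrite IHn. reflexivity. Qed.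

Lemma lprod_S n f : lprod (S n) f = lprod n f * f n.
Proof.
  unfold lprod. rewrite seq_S, map_app, fold_right_app. simpl.
  generalize (map f (seq 0 n)). intros l. induction l; simpl; [lra|]. rewrite IHl. lra.
Qed.

Lemma lprod_ext n f g : (forall i, (i < n)%nat -> f i = g i) -> lprod n f = lprod n g.
Proof.
  induction n; intros H; [reflexivity|].
  rewrite !lprod_S, IHn by (intros; apply H; lia). rewrite H by lia. reflexivity.
Qed.

Inductive ispoly : (R -> R) -> Prop :=
| ip_const c : ispoly (fun _ => c)
| ip_id : ispoly (fun y => y)
| ip_plus f g : ispoly f -> ispoly g -> ispoly (fun y => f y + g y)
| ip_mult f g : ispoly f -> ispoly g -> ispoly (fun y => f y * g y)
| ip_opp f : ispoly f -> ispoly (fun y => - f y).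

Lemma ispoly_deriv P : ispoly P -> exists P', ispoly P' /\ forall y, is_derive P y (P' y).
Proof.
  induction 1.
  - exists (fun _ => 0). split; [constructor|]. intros; auto_derive; auto.
  - exists (fun _ => 1). split; [constructor|]. intros; auto_derive; auto.
  - destruct IHispoly1 as [f' [Hf1 Hf2]]; destruct IHispoly2 as [g' [Hg1 Hg2]].
    exists (fun y => f' y + g' y). split; [constructor; auto|].
    intros y. apply (is_derive_plus f g); auto.
  - destruct IHispoly1 as [f' [Hf1 Hf2]]; destruct IHispoly2 as [g' [Hg1 Hg2]].
    exists (fun y => f' y * g y + f y * g' y). split; [repeat constructor; auto|].
    intros y. apply (is_derive_mult f g); auto. intros; apply Rmult_comm.
  - destruct IHispoly as [f' [Hf1 Hf2]].
    exists (fun y => - f' y). split; [constructor; auto|].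
    intros y. apply (is_derive_opp f); auto.
Qed.

Lemma ispoly_bound P : ispoly P -> exists M, forall y, 0 <= y <= 1 -> Rabs (P y) <= M.
Proof.
  induction 1.
  - exists (Rabs c); intros; lra.
  - exists 1; intros; rewrite Rabs_pos_eq; lra.
  - destruct IHispoly1 as [M1 H1]; destruct IHispoly2 as [M2 H2].
    exists (M1 + M2); intros y Hy. eapply Rle_trans; [apply Rabs_triang|].
    specialize (H1 y Hy); specialize (H2 y Hy); lra.
  - destruct IHispoly1 as [M1 H1]; destruct IHispoly2 as [M2 H2].
    exists (M1 * M2); intros y Hy. rewrite Rabs_mult.
    apply Rmult_le_compat; auto using Rabs_pos.
  - destruct IHispoly as [M HM]. exists M. intros. rewrite Rabs_Ropp. auto.
Qed.

Lemma logistic_range x : 0 < logistic x < 1.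
Proof.
  unfold logistic. pose proof (exp_pos (- x)).
  split; [apply Rdiv_lt_0_compat; lra|].
  apply (Rmult_lt_reg_r (1 + exp (- x))); [lra|].
  unfold Rdiv; rewrite Rmult_assoc, Rinv_l by lra. lra.
Qed.

Lemma logistic_deriv x : is_derive logistic x (logistic x * (1 - logistic x)).
Proof.
  unfold logistic. pose proof (exp_pos (- x)).
  evar (l : R). assert (H1 : is_derive (fun x => 1 / (1 + exp (- x))) x l).
  { subst l. auto_derive; [lra|reflexivity]. }
  replace (1 / (1 + exp (- x)) * (1 - 1 / (1 + exp (- x)))) with l; auto.
  subst l. field. lra.
Qed.

Lemma logistic_dn n : exists P, ispoly P /\ forall x,
  Derive_n logistic n x = P (logistic x) /\ ex_derive_n logistic n x.
Proof.
  induction n.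
  - exists (fun y => y); split; [constructor|]. intros; simpl; auto.
  - destruct IHn as [P [HP H]].
    destruct (ispoly_deriv P HP) as [P' [HP' HdP]].
    assert (Hd : forall x, is_derive (Derive_n logistic n) x (P' (logistic x) * (logistic x * (1 - logistic x)))).
    { intros x. apply (is_derive_ext (fun x => P (logistic x))).
      { intros t0; symmetry; apply (proj1 (H t0)). }
      rewrite Rmult_comm. apply (is_derive_comp P logistic); auto. apply logistic_deriv. }
    exists (fun y => P' y * (y * (1 - y))). split.
    + apply ip_mult; auto. apply ip_mult; [apply ip_id|]. apply ip_plus; [apply ip_const|]. apply ip_opp, ip_id.
    + intros x. split.
      * simpl. apply is_derive_unique. apply Hd.
      * simpl. eexists. apply Hd.
Qed.

Lemma logistic_dn_bound n : exists M, forall x, Rabs (Derive_n logistic n x) <= M.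
Proof.
  destruct (logistic_dn n) as [P [HP H]]. destruct (ispoly_bound P HP) as [M HM].
  exists M. intros x. rewrite (proj1 (H x)). apply HM. pose proof (logistic_range x); lra.
Qed.

Lemma logistic_ex n x : ex_derive_n logistic n x.
Proof. destruct (logistic_dn n) as [P [_ H]]. apply H. Qed.

Lemma rem_bound a F D M : 0 < F -> Rabs D <= M -> Rabs (a / F * D) <= M * Rabs a / F.
Proof.
  intros HF HD. rewrite Rabs_mult, Rabs_div, (Rabs_pos_eq F) by lra.
  replace (M * Rabs a / F) with (Rabs a / F * M) by (field; lra).
  apply Rmult_le_compat_l; [|auto]. apply Rdiv_le_0_compat; [apply Rabs_pos|lra].
Qed.

Lemma taylor_global f n M :
  (forall k x, ex_derive_n f k x) ->
  (forall x, Rabs (Derive_n f (S n) x) <= M) ->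
  forall v, Rabs (f v - lsum (S n) (fun m => v ^ m / INR (Factorial.fact m) * Derive_n f m 0))
            <= M * Rabs v ^ (S n) / INR (Factorial.fact (S n)).
Proof.
  intros Hex HM v.
  assert (Hf : 0 < INR (Factorial.fact (S n))) by (apply lt_0_INR, Factorial.lt_O_fact).
  destruct (Rtotal_order 0 v) as [Hv|[Hv|Hv]].
  - destruct (Taylor_Lagrange f n 0 v Hv) as [z [Hz E]].
    { intros; apply Hex. }
    rewrite E, sum_f_R0_lsum.
    rewrite (lsum_ext _ _ (fun m => v ^ m / INR (Factorial.fact m) * Derive_n f m 0)) by (intros; rewrite Rminus_0_r; reflexivity).
    rewrite Rminus_0_r.
    replace (_ + _ - _) with (v ^ S n / INR (Factorial.fact (S n)) * Derive_n f (S n) z) by ring.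
    rewrite RPow_abs. apply rem_bound; auto.
  - subst v. rewrite lsum_shift.
    rewrite (lsum_zero n) by (intros; rewrite pow_i by lia; unfold Rdiv; ring).
    replace (0 ^ 0 / INR (Factorial.fact 0) * Derive_n f 0 0) with (f 0) by (simpl; field).
    rewrite Rplus_0_r, Rminus_diag, Rabs_R0, pow_i by lia.
    unfold Rdiv; rewrite Rmult_0_r, Rmult_0_l; lra.
  - set (g := fun w => f (- w)).
    assert (Hl : forall k x, locally x (fun y : R => forall j, (j <= k)%nat -> ex_derive_n f j y)).
    { intros; apply filter_forall; intros; apply Hex. }
    assert (Hgex : forall k x, ex_derive_n g k x).
    { intros. unfold g. apply ex_derive_n_comp_opp. apply Hl. }
    assert (Hgd : forall k x, Derive_n g k x = (-1) ^ k * Derive_n f k (- x)).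
    { intros. unfold g. apply Derive_n_comp_opp. apply Hl. }
    assert (Hv' : 0 < - v) by lra.
    destruct (Taylor_Lagrange g n 0 (- v) Hv') as [z [Hz E]].
    { intros; apply Hgex. }
    unfold g in E at 1. rewrite Ropp_involutive in E.
    rewrite E, sum_f_R0_lsum.
    rewrite (lsum_ext _ _ (fun m => v ^ m / INR (Factorial.fact m) * Derive_n f m 0)).
    2:{ intros i _. rewrite Hgd, Ropp_0, Rminus_0_r.
        replace (- v) with (-1 * v) by ring. rewrite Rpow_mult_distr.
        assert (H1 : (-1) ^ i * (-1) ^ i = 1).
        { rewrite <- Rpow_mult_distr. replace (-1 * -1) with 1 by ring. apply pow1. }
        transitivity (((-1) ^ i * (-1) ^ i) * (v ^ i / INR (Factorial.fact i) * Derive_n f i 0)).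
        - unfold Rdiv; ring.
        - rewrite H1; ring. }
    rewrite Rminus_0_r.
    replace (_ + _ - _) with ((- v) ^ S n / INR (Factorial.fact (S n)) * Derive_n g (S n) z) by ring.
    rewrite <- (Rabs_Ropp v), RPow_abs. apply rem_bound; auto.
    rewrite Hgd, Rabs_mult, pow_1_abs, Rmult_1_l. apply HM.
Qed.

Lemma lsum_minus n f g : lsum n (fun i => f i - g i) = lsum n f - lsum n g.
Proof.
  unfold Rminus. rewrite lsum_plus. f_equal.
  rewrite (lsum_ext _ _ (fun i => -1 * g i)) by (intros; ring). rewrite lsum_scal. ring.
Qed.

Definition rprod (z : R) (L : list R) : R := fold_right (fun r acc => (z - r) * acc) 1 L.

Lemma poly_roots L : exists c : nat -> R, (forall k, (S (length L) <= k)%nat -> c k = 0) /\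
  forall z, lsum (S (length L)) (fun k => c k * z ^ k) = rprod z L.
Proof.
  induction L as [|r L IH].
  - exists (fun k => match k with 0 => 1 | _ => 0 end). split.
    + intros [|k] Hk; simpl in Hk; [lia|reflexivity].
    + intros z. unfold lsum; simpl. ring.
  - destruct IH as [c [Hc0 Hc]].
    exists (fun k => (match k with 0 => 0 | S k' => c k' end) - r * c k). split.
    + intros [|k] Hk; simpl in Hk; [lia|]. rewrite !Hc0 by lia. ring.
    + intros z. simpl length. simpl rprod.
      rewrite (lsum_ext _ _ (fun k => (match k with 0 => 0 | S k' => c k' end) * z ^ k + (- r) * (c k * z ^ k)))
        by (intros; ring).
      rewrite lsum_plus, lsum_scal, lsum_shift, (lsum_S (S (length L)) (fun k => c k * z ^ k)).
      rewrite Hc0 by lia.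
      rewrite (lsum_ext _ _ (fun k => z * (c k * z ^ k))) by (intros; simpl; ring).
      rewrite lsum_scal, Hc. fold (rprod z L). ring.
Qed.

Lemma rprod_zero z L : In z L -> rprod z L = 0.
Proof.
  induction L; simpl; [tauto|]. intros [H|H].
  - subst. ring.
  - fold (rprod z L). rewrite IHL by auto. ring.
Qed.

Lemma rprod_nz z L : (forall r, In r L -> r <> z) -> rprod z L <> 0.
Proof.
  induction L; simpl; intros H; [lra|]. fold (rprod z L).
  apply Rmult_integral_contrapositive. split.
  - intros E; apply (H a); auto; lra.
  - apply IHL; auto.
Qed.

Lemma logistic_d1 : Derive_n logistic 1 0 = 1 / 4.
Proof.
  simpl. rewrite (Derive_ext _ logistic) by reflexivity. rewrite (is_derive_unique _ _ _ (logistic_deriv 0)).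
  unfold logistic. rewrite Ropp_0, exp_0. field.
Qed.

Lemma passthrough (p : nat) : exists (c : nat -> R) (K : R), 0 <= K /\
  forall u, Rabs (lsum (S (S p)) (fun k => c k * logistic (2 ^ k * u)) - u) <= K * Rabs u ^ (S (S p)).
Proof.
  set (n := S p).
  destruct (logistic_dn_bound (S n)) as [M HM].
  assert (HM0 : 0 <= M) by (eapply Rle_trans; [apply Rabs_pos|apply (HM 0)]).
  pose proof (taylor_global logistic n M (fun k x => logistic_ex k x) HM) as HT.
  set (L := 1 :: map (fun m => 2 ^ (S (S m))) (seq 0 p)).
  assert (HL : length L = n) by (unfold L, n; simpl; rewrite length_map, length_seq; reflexivity).
  destruct (poly_roots L) as [c0 [_ Hc0]]. rewrite HL in Hc0.
  set (D := fun m => Derive_n logistic m 0).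
  set (kap := / (D 1%nat * rprod 2 L)).
  assert (HQ2 : rprod 2 L <> 0).
  { apply rprod_nz. unfold L. intros r [H|H]; [lra|].
    apply in_map_iff in H. destruct H as [j [Hj _]]. subst r.
    simpl. pose proof (pow_R1_Rle 2 j). lra. }
  assert (HD1 : D 1%nat = 1/4) by apply logistic_d1.
  set (Fm := fun m => INR (Factorial.fact m)).
  set (T := fun v => lsum (S n) (fun m => v ^ m / Fm m * D m)).
  assert (Hmain : forall u, lsum (S n) (fun k => kap * c0 k * T (2 ^ k * u)) = u).
  { intros u. unfold T.
    rewrite (lsum_ext _ _ (fun k => lsum (S n) (fun m => kap * c0 k * ((2 ^ k * u) ^ m / Fm m * D m)))).
    2:{ intros; rewrite <- lsum_scal; reflexivity. }
    rewrite lsum_swap.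
    rewrite (lsum_ext _ _ (fun m => (kap * (u ^ m / Fm m * D m)) * lsum (S n) (fun k => c0 k * (2 ^ m) ^ k))).
    2:{ intros m _. rewrite <- lsum_scal. apply lsum_ext. intros k _.
        rewrite Rpow_mult_distr, <- !pow_mult, Nat.mul_comm. unfold Rdiv; ring. }
    rewrite (lsum_single (S n) 1%nat); [| unfold n; lia |].
    - rewrite Hc0, !pow_1. unfold kap, Fm. change (INR (Factorial.fact 1)) with 1. field. split; auto. rewrite HD1; lra.
    - intros m Hm Hm1. rewrite Hc0, rprod_zero; [ring|].
      unfold L. destruct m as [|[|m]]; [left; simpl; ring | lia |].
      right. apply in_map_iff. exists m. split; [reflexivity|]. apply in_seq. unfold n in Hm. lia. }
  exists (fun k => kap * c0 k), (lsum (S n) (fun k => Rabs (kap * c0 k) * (M * (2 ^ k) ^ (S n) / Fm (S n)))).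
  assert (HF : 0 < Fm (S n)) by (apply lt_0_INR, Factorial.lt_O_fact).
  split.
  - rewrite <- (lsum_zero (S n) (fun _ => 0)) by auto. apply lsum_le. intros.
    apply Rmult_le_pos; [apply Rabs_pos|]. apply Rdiv_le_0_compat; [|lra].
    apply Rmult_le_pos; auto. apply pow_le, pow_le; lra.
  - intros u.
    transitivity (Rabs (lsum (S n) (fun k => kap * c0 k * logistic (2 ^ k * u)) -
                        lsum (S n) (fun k => kap * c0 k * T (2 ^ k * u)))).
    { rewrite Hmain. right; reflexivity. }
    rewrite <- lsum_minus.
    eapply Rle_trans; [apply lsum_abs|]. rewrite Rmult_comm, <- lsum_scal. apply lsum_le. intros k _.
    replace (kap * c0 k * logistic (2 ^ k * u) - (kap * c0 k * T (2 ^ k * u)))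
      with ((kap * c0 k) * (logistic (2 ^ k * u) - T (2 ^ k * u))) by ring.
    rewrite Rabs_mult. 
    replace (Rabs u ^ S n * (Rabs (kap * c0 k) * (M * (2 ^ k) ^ S n / Fm (S n))))
      with (Rabs (kap * c0 k) * (M * Rabs (2 ^ k * u) ^ S n / Fm (S n))).
    2:{ rewrite (Rabs_mult (2 ^ k) u), (Rabs_pos_eq (2 ^ k)) by (apply pow_le; lra). rewrite Rpow_mult_distr. unfold Rdiv. ring. }
    apply Rmult_le_compat_l; [apply Rabs_pos|]. apply HT.
Qed.

Lemma eh_fst act m ls x : fst (eval_hidden act m ls x) = last_width m ls.
Proof. revert m x; induction ls; intros; simpl; auto. Qed.

Lemma eh_app act m ls l x : eval_hidden act m (ls ++ [l]) x =
  (lw l, fun i => act (lsum (last_width m ls) (fun j => lW l i j * snd (eval_hidden act m ls x) j) + lb l i)).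
Proof. revert m x; induction ls; intros; simpl; auto. Qed.

Lemma last_width_app m ls l : last_width m (ls ++ [l]) = lw l.
Proof. unfold last_width. rewrite fold_left_app. reflexivity. Qed.

Lemma net_eval_eq act f x : net_eval act f x =
  lsum (last_width (n_in f) (n_hidden f)) (fun j => n_out_w f j * snd (eval_hidden act (n_in f) (n_hidden f) x) j) + n_out_b f.
Proof.
  unfold net_eval. rewrite (surjective_pairing (eval_hidden act (n_in f) (n_hidden f) x)), eh_fst. reflexivity.
Qed.

Definition hid (d : nat) (ls : list layer) (x : nat -> R) := snd (eval_hidden logistic d ls x).

Definition Rd (d : nat) (ls : list layer) (g : nat -> R) (g0 : R) (x : nat -> R) :=
  lsum (last_width d ls) (fun j => g j * hid d ls x j) + g0.

Definition Stage (d N : nat) (K : R) (ls : list layer) (m : nat)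
  (g : nat -> nat -> R) (g0 : nat -> R) (T : nat -> (nat -> R) -> R) : Prop :=
  (m <= d)%nat /\ (1 <= m)%nat /\ 0 <= K /\ List.Forall (fun l => (lw l <= 2 * N * d)%nat) ls /\
  (forall x, lprod m (fun i => T i x) = lprod d x) /\
  forall A x, 0 < A <= 1 -> (forall j, (j < d)%nat -> -A <= x j <= A) -> forall i, (i < m)%nat ->
    Rabs (Rd d ls (g i) (g0 i) x - T i x) <= K * A ^ N /\ Rabs (T i x) <= A.

Lemma divmod_eq M q r : (r < M)%nat -> ((M * q + r) / M = q /\ (M * q + r) mod M = r)%nat.
Proof.
  intros H. split.
  - symmetry. apply (Nat.div_unique _ _ _ r); auto.
  - symmetry. apply (Nat.mod_unique _ _ q r); auto.
Qed.

Lemma lprod_pairs k T : lprod (2 * k) T = lprod k (fun q => T (2 * q)%nat * T (2 * q + 1)%nat).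
Proof.
  induction k.
  - reflexivity.
  - replace (2 * S k)%nat with (S (S (2 * k))) by lia. rewrite !lprod_S, IHk.
    replace (S (2 * k)) with (2 * k + 1)%nat by lia. ring.
Qed.

Lemma stage_init d N : (1 <= d)%nat ->
  Stage d N 0 [] d (fun i j => if Nat.eqb i j then 1 else 0) (fun _ => 0) (fun i x => x i).
Proof.
  intros Hd. split; [lia|]. split; [lia|]. split; [lra|]. split; [constructor|].
  split; [reflexivity|].
  intros A x HA Hx i Hi. split.
  - unfold Rd, hid. simpl. unfold last_width; simpl.
    rewrite (lsum_single d i) by (auto; intros j _ Hj; rewrite (proj2 (Nat.eqb_neq i j)) by auto; ring).
    rewrite Nat.eqb_refl. replace (1 * x i + 0 - x i) with 0 by ring. rewrite Rabs_R0.
    apply Rmult_le_pos; [lra|]. apply pow_le; lra.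
  - specialize (Hx i Hi). apply Rabs_le. lra.
Qed.

Definition pairq (m q : nat) : bool := Nat.ltb (2 * q + 1) m.
Definition lam (N : nat) (beta : nat -> R) m q r : R :=
  if pairq m q then (if Nat.ltb r N then beta r else beta (r - N)%nat) else (if Nat.ltb r N then 2 ^ r else 0).
Definition mu (N : nat) (beta : nat -> R) m q r : R :=
  if pairq m q then (if Nat.ltb r N then beta r else - beta (r - N)%nat) else 0.
Definition nu (t : R) m q : R := if pairq m q then t else 0.

Definition mklayer N t beta m (g : nat -> nat -> R) (g0 : nat -> R) : layer :=
  {| lw := (2 * N * ((m + 1) / 2))%nat;
     lW := fun i j => lam N beta m (i / (2 * N)) (i mod (2 * N)) * g (2 * (i / (2 * N)))%nat j
                    + mu N beta m (i / (2 * N)) (i mod (2 * N)) * g (2 * (i / (2 * N)) + 1)%nat j;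
     lb := fun i => lam N beta m (i / (2 * N)) (i mod (2 * N)) * g0 (2 * (i / (2 * N)))%nat
                    + mu N beta m (i / (2 * N)) (i mod (2 * N)) * g0 (2 * (i / (2 * N)) + 1)%nat
                    + nu t m (i / (2 * N)) |}.

Definition k2 t := / 4 * (2 / Derive_n logistic 2 t).
Definition rho N t (alpha c : nat -> R) m q r : R :=
  if pairq m q then (if Nat.ltb r N then k2 t * alpha r else - (k2 t * alpha (r - N)%nat))
  else (if Nat.ltb r N then c r else 0).
Definition gnew N t alpha c m (q i : nat) : R :=
  if Nat.eqb (i / (2 * N)) q then rho N t alpha c m q (i mod (2 * N)) else 0.
Definition Tnew m (T : nat -> (nat -> R) -> R) q x : R :=
  if pairq m q then T (2 * q)%nat x * T (2 * q + 1)%nat x else T (2 * q)%nat x.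

Lemma mk_lw N t beta m g g0 : lw (mklayer N t beta m g g0) = (2 * N * ((m + 1) / 2))%nat.
Proof. reflexivity. Qed.
Lemma mk_lW N t beta m g g0 i j : lW (mklayer N t beta m g g0) i j =
  lam N beta m (i / (2 * N)) (i mod (2 * N)) * g (2 * (i / (2 * N)))%nat j
  + mu N beta m (i / (2 * N)) (i mod (2 * N)) * g (2 * (i / (2 * N)) + 1)%nat j.
Proof. reflexivity. Qed.
Lemma mk_lb N t beta m g g0 i : lb (mklayer N t beta m g g0) i =
  lam N beta m (i / (2 * N)) (i mod (2 * N)) * g0 (2 * (i / (2 * N)))%nat
  + mu N beta m (i / (2 * N)) (i mod (2 * N)) * g0 (2 * (i / (2 * N)) + 1)%nat
  + nu t m (i / (2 * N)).
Proof. reflexivity. Qed.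

Lemma readout_val d N t alpha beta c m g g0 ls x q : (0 < N)%nat -> (q < (m + 1) / 2)%nat ->
  Rd d (ls ++ [mklayer N t beta m g g0]) (gnew N t alpha c m q) 0 x =
  lsum (2 * N) (fun r => rho N t alpha c m q r *
     logistic (lam N beta m q r * Rd d ls (g (2 * q)%nat) (g0 (2 * q)%nat) x
             + mu N beta m q r * Rd d ls (g (2 * q + 1)%nat) (g0 (2 * q + 1)%nat) x + nu t m q)).
Proof.
  intros HN Hq. unfold Rd at 1. rewrite last_width_app. unfold hid. rewrite eh_app, mk_lw. cbn [snd].
  rewrite Rplus_0_r, lsum_mul.
  rewrite (lsum_single _ q); auto.
  2:{ intros q' _ Hq'; apply lsum_zero; intros r Hr.
     destruct (divmod_eq (2 * N) q' r Hr) as [E1 E2]. unfold gnew. rewrite E1.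
     rewrite (proj2 (Nat.eqb_neq q' q)) by auto; ring. }
  apply lsum_ext. intros r Hr. destruct (divmod_eq (2 * N) q r Hr) as [E1 E2].
  unfold gnew. rewrite E1, E2, Nat.eqb_refl. f_equal. unfold mklayer. cbn [lW lb]. rewrite E1, E2.
  f_equal. unfold Rd, hid.
  set (a := lam N beta m q r). set (b := mu N beta m q r).
  rewrite (lsum_ext _ _ (fun j => a * (g (2 * q)%nat j * snd (eval_hidden logistic d ls x) j) +
                                 b * (g (2 * q + 1)%nat j * snd (eval_hidden logistic d ls x) j)))
    by (intros; ring).
  rewrite lsum_plus, !lsum_scal. ring.
Qed.

Lemma pow_le1 x n : 0 <= x <= 1 -> x ^ n <= 1.
Proof.
  intros H; induction n; simpl; [lra|].
  assert (0 <= x ^ n) by (apply pow_le; lra).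
  replace 1 with (1 * 1) by ring. apply Rmult_le_compat; lra.
Qed.

Lemma powN_le A N : 0 < A <= 1 -> (1 <= N)%nat -> 0 <= A ^ N <= A.
Proof.
  intros HA HN. split; [apply pow_le; lra|].
  destruct N; [lia|]. assert (A ^ N <= 1) by (apply pow_le1; lra).
  assert (0 <= A ^ N) by (apply pow_le; lra). simpl. nra.
Qed.

Lemma R_bound K A N R T : 0 < A <= 1 -> (1 <= N)%nat -> 0 <= K ->
  Rabs (R - T) <= K * A ^ N -> Rabs T <= A -> Rabs R <= (1 + K) * A.
Proof.
  intros HA HN HK H1 H2. pose proof (powN_le A N HA HN).
  assert (K * A ^ N <= K * A) by (apply Rmult_le_compat_l; lra).
  replace R with ((R - T) + T) by ring. eapply Rle_trans; [apply Rabs_triang|]. lra.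
Qed.

Lemma pair_err c56 K A N Ra Rb Ta Tb fm : 0 < A <= 1 -> (1 <= N)%nat -> 0 <= K ->
  Rabs (Ra - Ta) <= K * A ^ N -> Rabs (Rb - Tb) <= K * A ^ N -> Rabs Ta <= A -> Rabs Tb <= A ->
  Rabs (fm - Ra * Rb) <= c56 * (1 + K) ^ N * A ^ N ->
  Rabs (fm - Ta * Tb) <= (c56 * (1 + K) ^ N + (2 + K) * K) * A ^ N.
Proof.
  intros HA HN HK Ha Hb HTa HTb Hf.
  pose proof (R_bound K A N Ra Ta HA HN HK Ha HTa) as HRa.
  pose proof (powN_le A N HA HN) as HAN.
  replace (fm - Ta * Tb) with ((fm - Ra * Rb) + Ra * (Rb - Tb) + Tb * (Ra - Ta)) by ring.
  eapply Rle_trans; [apply Rabs_triang|].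
  eapply Rle_trans; [apply Rplus_le_compat_r, Rabs_triang|].
  rewrite !Rabs_mult.
  assert (E1 : Rabs Ra * Rabs (Rb - Tb) <= (1 + K) * K * A ^ N).
  { eapply Rle_trans. apply Rmult_le_compat; [apply Rabs_pos|apply Rabs_pos|apply HRa|apply Hb].
    replace ((1 + K) * A * (K * A ^ N)) with (((1 + K) * K * A ^ N) * A) by ring.
    rewrite <- (Rmult_1_r ((1 + K) * K * A ^ N)) at 2. apply Rmult_le_compat_l; [|lra].
    apply Rmult_le_pos; [apply Rmult_le_pos|]; lra. }
  assert (E2 : Rabs Tb * Rabs (Ra - Ta) <= K * A ^ N).
  { eapply Rle_trans. apply Rmult_le_compat; [apply Rabs_pos|apply Rabs_pos|apply HTb|apply Ha].
    replace (A * (K * A ^ N)) with ((K * A ^ N) * A) by ring.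
    rewrite <- (Rmult_1_r (K * A ^ N)) at 2. apply Rmult_le_compat_l; [|lra].
    apply Rmult_le_pos; lra. }
  lra.
Qed.

Lemma single_err Kp K A N Ra Ta I : 0 < A <= 1 -> (1 <= N)%nat -> 0 <= K -> 0 <= Kp ->
  Rabs (Ra - Ta) <= K * A ^ N -> Rabs Ta <= A ->
  Rabs (I - Ra) <= Kp * Rabs Ra ^ N ->
  Rabs (I - Ta) <= (Kp * (1 + K) ^ N + K) * A ^ N.
Proof.
  intros HA HN HK HKp Ha HTa HI.
  pose proof (R_bound K A N Ra Ta HA HN HK Ha HTa) as HRa.
  assert (Rabs Ra ^ N <= ((1 + K) * A) ^ N) by (apply pow_incr; split; [apply Rabs_pos|auto]).
  rewrite Rpow_mult_distr in H.
  assert (Kp * Rabs Ra ^ N <= Kp * ((1 + K) ^ N * A ^ N)) by (apply Rmult_le_compat_l; auto).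
  replace (I - Ta) with ((I - Ra) + (Ra - Ta)) by ring.
  eapply Rle_trans; [apply Rabs_triang|]. nra.
Qed.

Lemma Rabs_le_inv' a b : Rabs a <= b -> -b <= a <= b.
Proof. intros H. pose proof (Rabs_maj2 a). pose proof (Rle_abs a). lra. Qed.

Lemma sum_pair N t alpha beta c m q Ra Rb : pairq m q = true ->
  lsum (2 * N) (fun r => rho N t alpha c m q r *
     logistic (lam N beta m q r * Ra + mu N beta m q r * Rb + nu t m q)) = f_mult N t alpha beta Ra Rb.
Proof.
  intros Hp. replace (2 * N)%nat with (N + N)%nat by lia. rewrite lsum_add.
  unfold rho, lam, mu, nu. rewrite Hp.
  rewrite (lsum_ext N _ (fun r => k2 t * (alpha r * logistic (beta r * (Ra + Rb) + t)))).
  2:{ intros r Hr. replace (Nat.ltb r N) with true by (symmetry; apply Nat.ltb_lt; lia). cbv beta iota.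
      replace (beta r * Ra + beta r * Rb + t) with (beta r * (Ra + Rb) + t) by ring. ring. }
  set (S1 := lsum N (fun r => k2 t * (alpha r * logistic (beta r * (Ra + Rb) + t)))).
  rewrite (lsum_ext N _ (fun r => - k2 t * (alpha r * logistic (beta r * (Ra - Rb) + t)))).
  2:{ intros r Hr. replace (Nat.ltb (N + r) N) with false by (symmetry; apply Nat.ltb_ge; lia).
      replace (N + r - N)%nat with r by lia. cbv beta iota.
      replace (beta r * Ra + - beta r * Rb + t) with (beta r * (Ra - Rb) + t) by ring. ring. }
  unfold S1. rewrite !lsum_scal. unfold f_mult, f_net_sq, k2. ring.
Qed.

Lemma sum_single N t alpha beta c m q Ra Rb : pairq m q = false ->
  lsum (2 * N) (fun r => rho N t alpha c m q r *
     logistic (lam N beta m q r * Ra + mu N beta m q r * Rb + nu t m q)) =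
  lsum N (fun k => c k * logistic (2 ^ k * Ra)).
Proof.
  intros Hp. replace (2 * N)%nat with (N + N)%nat by lia. rewrite lsum_add. cbv beta.
  rewrite (lsum_zero N (fun i => rho N t alpha c m q (N + i) * logistic (lam N beta m q (N + i) * Ra
             + mu N beta m q (N + i) * Rb + nu t m q))).
  2:{ intros r Hr. unfold rho. rewrite Hp.
      replace (Nat.ltb (N + r) N) with false by (symmetry; apply Nat.ltb_ge; lia). cbv beta iota. ring. }
  rewrite Rplus_0_r. apply lsum_ext. intros r Hr. unfold rho, lam, mu, nu. rewrite Hp.
  replace (Nat.ltb r N) with true by (symmetry; apply Nat.ltb_lt; lia). cbv beta iota.
  f_equal. f_equal. ring.
Qed.

Lemma lprod_new m T x : (1 <= m)%nat -> lprod ((m + 1) / 2) (fun q => Tnew m T q x) = lprod m (fun i => T i x).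
Proof.
  intros Hm. destruct (Nat.Even_or_Odd m) as [[k Hk]|[k Hk]]; subst m.
  - replace ((2 * k + 1) / 2)%nat with k.
    2:{ apply (Nat.div_unique _ _ _ 1); lia. }
    rewrite lprod_pairs. apply lprod_ext. intros q Hq. unfold Tnew, pairq.
    replace (Nat.ltb (2 * q + 1) (2 * k)) with true by (symmetry; apply Nat.ltb_lt; lia). reflexivity.
  - replace ((2 * k + 1 + 1) / 2)%nat with (S k).
    2:{ apply (Nat.div_unique _ _ _ 0); lia. }
    rewrite lprod_S, Nat.add_1_r, lprod_S, lprod_pairs. f_equal.
    + apply lprod_ext. intros q Hq. unfold Tnew, pairq.
      replace (Nat.ltb (2 * q + 1) (S (2 * k))) with true by (symmetry; apply Nat.ltb_lt; lia). reflexivity.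
    + unfold Tnew, pairq. replace (Nat.ltb (2 * k + 1) (S (2 * k))) with false by (symmetry; apply Nat.ltb_ge; lia).
      reflexivity.
Qed.

Lemma step d N t alpha beta c c56 Kp K ls m g g0 T :
  (3 <= N)%nat -> 0 < c56 -> 0 <= Kp ->
  (forall A x y, 0 < A -> -A <= x <= A -> -A <= y <= A ->
     Rabs (f_mult N t alpha beta x y - x * y) <= c56 * A ^ N) ->
  (forall u, Rabs (lsum N (fun k => c k * logistic (2 ^ k * u)) - u) <= Kp * Rabs u ^ N) ->
  (2 <= m)%nat ->
  Stage d N K ls m g g0 T ->
  Stage d N (c56 * (1 + K) ^ N + (2 + K) * K + (Kp * (1 + K) ^ N + K)) (ls ++ [mklayer N t beta m g g0]) ((m + 1) / 2)
    (gnew N t alpha c m) (fun _ => 0) (Tnew m T).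
Proof.
  intros HN Hc56 HKp Hfm Hpt Hm [Hmd [Hm1 [HK [Hw [Hprod Herr]]]]].
  assert (Hm' : ((m + 1) / 2 <= m)%nat) by (apply Nat.div_le_upper_bound; lia).
  assert (Hm'1 : (1 <= (m + 1) / 2)%nat) by (apply Nat.div_le_lower_bound; lia).
  assert (HKK : 0 <= c56 * (1 + K) ^ N + (2 + K) * K).
  { apply Rplus_le_le_0_compat; [apply Rmult_le_pos; [lra|apply pow_le; lra]|apply Rmult_le_pos; lra]. }
  assert (HKK2 : 0 <= Kp * (1 + K) ^ N + K).
  { apply Rplus_le_le_0_compat; [apply Rmult_le_pos; [lra|apply pow_le; lra]|lra]. }
  split; [lia|]. split; [lia|]. split; [lra|]. split.
  { apply Forall_app. split; auto. constructor; [|constructor]. rewrite mk_lw.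
    apply Nat.mul_le_mono_l. lia. }
  split.
  { intros x. rewrite lprod_new by lia. apply Hprod. }
  intros A x HA Hx q Hq.
  assert (HAN : 0 <= A ^ N) by (apply pow_le; lra).
  unfold Rd at 1.
  fold (Rd d (ls ++ [mklayer N t beta m g g0]) (gnew N t alpha c m q) 0 x).
  rewrite readout_val by lia.
  assert (Hdiv : (2 * ((m + 1) / 2) <= m + 1)%nat) by (apply Nat.mul_div_le; lia).
  destruct (Herr A x HA Hx (2 * q)%nat) as [Ea Ta]; [lia|].
  case_eq (pairq m q); intros Hp.
  - rewrite sum_pair by auto.
    assert (Hq1 : (2 * q + 1 < m)%nat) by (unfold pairq in Hp; apply Nat.ltb_lt; auto).
    destruct (Herr A x HA Hx (2 * q + 1)%nat Hq1) as [Eb Tb].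
    unfold Tnew; rewrite Hp. split.
    + pose proof (R_bound K A N _ _ HA ltac:(lia) HK Ea Ta) as Ba.
      pose proof (R_bound K A N _ _ HA ltac:(lia) HK Eb Tb) as Bb.
      eapply Rle_trans. apply (pair_err c56 K A N _ _ _ _ _ HA ltac:(lia) HK Ea Eb Ta Tb).
      * rewrite Rmult_assoc, <- Rpow_mult_distr. apply Hfm; [apply Rmult_lt_0_compat; lra| |];
          apply Rabs_le_inv'; auto.
      * apply Rmult_le_compat_r; auto. lra.
    + rewrite Rabs_mult. pose proof (Rabs_pos (T (2 * q)%nat x)). pose proof (Rabs_pos (T (2 * q + 1)%nat x)). nra.
  - rewrite sum_single by auto. unfold Tnew; rewrite Hp. split; auto.
    eapply Rle_trans. apply (single_err Kp K A N _ _ _ HA ltac:(lia) HK HKp Ea Ta (Hpt _)).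
    apply Rmult_le_compat_r; auto. lra.
Qed.

Lemma log_step m : (2 <= m)%nat -> (S (Nat.log2_up ((m + 1) / 2)) <= Nat.log2_up m)%nat.
Proof.
  intros Hm. pose proof (Nat.log2_up_spec m ltac:(lia)) as [H1 H2].
  pose proof (Nat.log2_up_pos m ltac:(lia)) as HL.
  set (L := Nat.log2_up m) in *.
  assert (E : (2 ^ L = 2 * 2 ^ Nat.pred L)%nat).
  { replace L with (S (Nat.pred L)) at 1 by lia. apply Nat.pow_succ_r'. }
  assert (H3 : ((m + 1) / 2 < 2 ^ Nat.pred L + 1)%nat) by (apply Nat.div_lt_upper_bound; lia).
  assert (H4 : (Nat.log2_up ((m + 1) / 2) <= Nat.pred L)%nat).
  { apply Nat.log2_up_le_pow2; [apply Nat.div_str_pos; lia| lia]. }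
  lia.
Qed.

Lemma iterate d N t alpha beta c c56 Kp :
  (3 <= N)%nat -> 0 < c56 -> 0 <= Kp ->
  (forall A x y, 0 < A -> -A <= x <= A -> -A <= y <= A ->
     Rabs (f_mult N t alpha beta x y - x * y) <= c56 * A ^ N) ->
  (forall u, Rabs (lsum N (fun k => c k * logistic (2 ^ k * u)) - u) <= Kp * Rabs u ^ N) ->
  forall m, (1 <= m)%nat -> forall K ls g g0 T, Stage d N K ls m g g0 T ->
  exists K' ls' g' g0' T', Stage d N K' ls' 1 g' g0' T' /\ (length ls' <= length ls + Nat.log2_up m)%nat.
Proof.
  intros HN Hc HKp Hfm Hpt m. induction m as [m IH] using (well_founded_induction Wf_nat.lt_wf). intros Hm K ls g g0 T HS.
  destruct (Nat.eq_dec m 1) as [E|E].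
  - subst m. exists K, ls, g, g0, T. split; auto. lia.
  - pose proof (step d N t alpha beta c c56 Kp K ls m g g0 T HN Hc HKp Hfm Hpt ltac:(lia) HS) as HS'.
    assert (Hlt : ((m + 1) / 2 < m)%nat) by (apply Nat.div_lt_upper_bound; lia).
    assert (H1 : (1 <= (m + 1) / 2)%nat) by (apply Nat.div_le_lower_bound; lia).
    destruct (IH _ Hlt H1 _ _ _ _ _ HS') as [K' [ls' [g' [g0' [T' [HF HL]]]]]].
    exists K', ls', g', g0', T'. split; auto.
    rewrite length_app in HL. cbn [length] in HL. pose proof (log_step m ltac:(lia)). lia.
Qed.

Lemma fin1 n (f : nat -> R) : exists B, 0 <= B /\ forall i, (i < n)%nat -> Rabs (f i) <= B.
Proof.
  induction n.
  - exists 0. split; [lra|]. intros; lia.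
  - destruct IHn as [B [HB H]]. exists (Rmax B (Rabs (f n))). split.
    + eapply Rle_trans; [apply HB|apply Rmax_l].
    + intros i Hi. destruct (Nat.eq_dec i n).
      * subst; apply Rmax_r.
      * eapply Rle_trans; [apply H; lia|apply Rmax_l].
Qed.

Lemma fin2 n m (f : nat -> nat -> R) : exists B, 0 <= B /\ forall i j, (i < n)%nat -> (j < m)%nat -> Rabs (f i j) <= B.
Proof.
  induction n.
  - exists 0. split; [lra|]. intros; lia.
  - destruct IHn as [B [HB H]]. destruct (fin1 m (f n)) as [B2 [HB2 H2]].
    exists (Rmax B B2). split.
    + eapply Rle_trans; [apply HB|apply Rmax_l].
    + intros i j Hi Hj. destruct (Nat.eq_dec i n).
      * subst; eapply Rle_trans; [apply H2; auto|apply Rmax_r].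
      * eapply Rle_trans; [apply H; lia|apply Rmax_l].
Qed.

Lemma hwb_mono B B' m ls : B <= B' -> hidden_wbound B m ls -> hidden_wbound B' m ls.
Proof.
  revert m; induction ls; simpl; auto. intros m HB [H1 [H2 H3]]. split; [|split].
  - intros; eapply Rle_trans; [apply H1|]; auto.
  - intros; eapply Rle_trans; [apply H2|]; auto.
  - eapply IHls; eauto.
Qed.

Lemma hwb_ex m ls : exists B, 0 <= B /\ hidden_wbound B m ls.
Proof.
  revert m; induction ls as [|l ls IH]; intros m.
  - exists 0. split; [lra|]. simpl; auto.
  - destruct (IH (lw l)) as [B1 [HB1 H1]].
    destruct (fin2 (lw l) m (lW l)) as [B2 [HB2 H2]].
    destruct (fin1 (lw l) (lb l)) as [B3 [HB3 H3]].
    exists (Rmax B1 (Rmax B2 B3)).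
    assert (B1 <= Rmax B1 (Rmax B2 B3)) by apply Rmax_l.
    assert (B2 <= Rmax B1 (Rmax B2 B3)) by (eapply Rle_trans; [apply (Rmax_l B2 B3)|apply Rmax_r]).
    assert (B3 <= Rmax B1 (Rmax B2 B3)) by (eapply Rle_trans; [apply (Rmax_r B2 B3)|apply Rmax_r]).
    split; [lra|]. simpl. split; [|split].
    + intros; eapply Rle_trans; [apply H2|]; auto.
    + intros; eapply Rle_trans; [apply H3|]; auto.
    + eapply hwb_mono; [|apply H1]; auto.
Qed.

Lemma net_wb_ex f : exists B, net_wbound B f.
Proof.
  destruct (hwb_ex (n_in f) (n_hidden f)) as [B1 [HB1 H1]].
  destruct (fin1 (last_width (n_in f) (n_hidden f)) (n_out_w f)) as [B2 [HB2 H2]].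
  exists (Rmax B1 (Rmax B2 (Rabs (n_out_b f)))).
  assert (B1 <= Rmax B1 (Rmax B2 (Rabs (n_out_b f)))) by apply Rmax_l.
  assert (B2 <= Rmax B1 (Rmax B2 (Rabs (n_out_b f)))) by (eapply Rle_trans; [apply (Rmax_l B2)|apply Rmax_r]).
  assert (Rabs (n_out_b f) <= Rmax B1 (Rmax B2 (Rabs (n_out_b f)))) by (eapply Rle_trans; [apply (Rmax_r B2)|apply Rmax_r]).
  split; [|split]; auto.
  - eapply hwb_mono; [|apply H1]; auto.
  - intros; eapply Rle_trans; [apply H2|]; auto.
Qed.

Theorem lemma11 (N d : nat) (t : R) (alpha beta : nat -> R) (c54 c56 : R) :
  (2 < N)%nat -> (1 <= d)%nat ->
  Derive_n logistic 2 t <> 0 ->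
  0 <= c54 ->
  (forall A x, 0 < A -> -A <= x <= A ->
     Rabs (f_net_sq N t alpha beta x - x ^ 2) <= c54 * A ^ N) ->
  0 < c56 ->
  (forall A x y, 0 < A -> -A <= x <= A -> -A <= y <= A ->
     Rabs (f_mult N t alpha beta x y - x * y) <= c56 * A ^ N) ->
  exists B c57 : R, 0 <= c57 /\
    forall A : R, 0 < A <= 1 -> c56 * 4 ^ (d * N) * A ^ (N - 1) <= 1 ->
    exists f : net,
      n_in f = d /\
      (num_hidden f <= Nat.log2_up d)%nat /\
      widths_le (2 * N * d) f /\
      net_wbound B f /\
      forall x : nat -> R, (forall j, (j < d)%nat -> -A <= x j <= A) ->
        Rabs (net_eval logistic f x - lprod d x) <= c57 * A ^ N.
Proof.
  intros HN Hd _ _ _ Hc56 Hfm.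
  destruct N as [|[|p]]; [lia|lia|].
  destruct (passthrough p) as [c [Kp [HKp Hpt]]].
  destruct (iterate d (S (S p)) t alpha beta c c56 Kp ltac:(lia) Hc56 HKp Hfm Hpt d Hd 0 [] _ _ _
              (stage_init d (S (S p)) Hd)) as [K [ls [g [g0 [T [HS HL]]]]]].
  set (f := {| n_in := d; n_hidden := ls; n_out_w := g 0%nat; n_out_b := g0 0%nat |}).
  destruct (net_wb_ex f) as [B HB].
  destruct HS as [_ [_ [HK [Hw [Hprod Herr]]]]].
  exists B, K. split; auto. intros A HA _. exists f.
  split; [reflexivity|]. split; [unfold num_hidden; simpl in HL |- *; lia|].
  split; [exact Hw|]. split; [exact HB|].
  intros x Hx. rewrite net_eval_eq.
  destruct (Herr A x HA Hx 0%nat ltac:(lia)) as [E _].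
  rewrite <- Hprod. unfold lprod; simpl. rewrite Rmult_1_r.
  exact E.
Qed.
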